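(* Let $A$ and $B$ be groups admitting regular left-orders. Then the free product $A*B$ admits a one-counter left-order.
   Context: A left-order on a group $G$ is a total order invariant under left multiplication, with positive cone $\{g:1\prec g\}$. It is regular (resp. one-counter) if $G$ is finitely generated and there exist a finite set $X$, a surjective monoid homomorphism $\pi\colon X^*\to G$ and a language $\mathcal{L}\subseteq X^*$ accepted by a finite state automaton (resp. by a nondeterministic pushdown automaton with a single stack symbol) with $\pi(\mathcal{L})$ equal to the positive cone. *)

(* Defs.v *)
From mathcomp Require Import all_boot.
Set Implicit Arguments. Unset Strict Implicit. Unset Printing Implicit Defensive.

Record group := Group {
  gcar :> Type;
  gmul : gcar -> gcar -> gcar;
  gone : gcar;
  ginv : gcar -> gcar;
  gmulA : forall x y z, gmul x (gmul y z) = gmul (gmul x y) z;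
  gmul1l : forall x, gmul gone x = x;
  gmulVl : forall x, gmul (ginv x) x = gone }.

Definition is_hom (G H : group) (f : G -> H) : Prop :=
  forall x y, f (gmul x y) = gmul (f x) (f y).

Definition is_free_product (A B G : group) (iA : A -> G) (iB : B -> G) : Prop :=
  is_hom iA /\ is_hom iB /\
  forall (H : group) (fA : A -> H) (fB : B -> H), is_hom fA -> is_hom fB ->
    (exists f : G -> H, is_hom f /\ (forall a, f (iA a) = fA a)
                                 /\ (forall b, f (iB b) = fB b)) /\
    (forall f g : G -> H, is_hom f -> is_hom g ->
       (forall a, f (iA a) = g (iA a)) -> (forall b, f (iB b) = g (iB b)) ->
       forall x, f x = g x).

Definition is_left_order (G : group) (lt : G -> G -> Prop) : Prop :=
  (forall x, ~ lt x x) /\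
  (forall x y z, lt x y -> lt y z -> lt x z) /\
  (forall x y, x = y \/ lt x y \/ lt y x) /\
  (forall g x y, lt x y -> lt (gmul g x) (gmul g y)).

Definition positive_cone (G : group) (lt : G -> G -> Prop) (g : G) : Prop :=
  lt (gone G) g.

Definition is_monoid_hom (X : Type) (G : group) (pi : seq X -> G) : Prop :=
  pi [::] = gone G /\ forall u v, pi (u ++ v) = gmul (pi u) (pi v).

Definition image_is_cone (X : Type) (G : group) (lt : G -> G -> Prop)
    (pi : seq X -> G) (L : seq X -> Prop) : Prop :=
  (forall w, L w -> positive_cone lt (pi w)) /\
  (forall g, positive_cone lt g -> exists w, L w /\ pi w = g).

Record nfa (X : finType) := NFA {
  nstate : finType;
  nstart : nstate;
  nfinal : pred nstate;
  ntrans : nstate -> X -> nstate -> bool }.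

Inductive nfa_reach (X : finType) (M : nfa X) : nstate M -> seq X -> nstate M -> Prop :=
| nfa_nil q : nfa_reach q [::] q
| nfa_cons q x q' w q'' : ntrans q x q' -> nfa_reach q' w q'' ->
    nfa_reach q (x :: w) q''.

Definition nfa_accepts (X : finType) (M : nfa X) (w : seq X) : Prop :=
  exists q, @nfa_reach X M (nstart M) w q /\ nfinal q.

(** * One-counter automata: nondeterministic pushdown automata whose stack
    alphabet consists of a bottom marker and a single stack symbol c; the
    stack is c^n ⊥ and is represented by n.  A transition
    (q, a, z, q', k) with a : option X (None = epsilon move) applies when
    the top of the stack is ⊥ (z = true, i.e. n = 0) or c (z = false, n > 0);
    it pops the top symbol and pushes c^k (followed by ⊥ again if the popped
    symbol was ⊥). *)
Record oca (X : finType) := OCA {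
  ostate : finType;
  ostart : ostate;
  ofinal : pred ostate;
  otrans : seq (ostate * option X * bool * ostate * nat) }.

Definition oca_step (X : finType) (M : oca X) (q : ostate M) (n : nat)
    (a : option X) (q' : ostate M) (n' : nat) : Prop :=
  exists z k, (q, a, z, q', k) \in otrans M /\ z = (n == 0) /\
              n' = (if z then k else n.-1 + k).

Inductive oca_reach (X : finType) (M : oca X) :
    ostate M -> nat -> seq X -> ostate M -> nat -> Prop :=
| oca_nil q n : oca_reach q n [::] q n
| oca_eps q n q' n' w q'' n'' : @oca_step X M q n None q' n' ->
    oca_reach q' n' w q'' n'' -> oca_reach q n w q'' n''
| oca_read q n x q' n' w q'' n'' : @oca_step X M q n (Some x) q' n' ->
    oca_reach q' n' w q'' n'' -> oca_reach q n (x :: w) q'' n''.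

Definition oca_accepts (X : finType) (M : oca X) (w : seq X) : Prop :=
  exists q n, @oca_reach X M (ostart M) 0 w q n /\ ofinal q.

Definition regular_left_order (G : group) (lt : G -> G -> Prop) : Prop :=
  is_left_order lt /\
  exists (X : finType) (pi : seq X -> G),
    is_monoid_hom pi /\ (forall g, exists w, pi w = g) /\
    exists M : nfa X, image_is_cone lt pi (nfa_accepts M).

Definition one_counter_left_order (G : group) (lt : G -> G -> Prop) : Prop :=
  is_left_order lt /\
  exists (X : finType) (pi : seq X -> G),
    is_monoid_hom pi /\ (forall g, exists w, pi w = g) /\
    exists M : oca X, image_is_cone lt pi (oca_accepts M).

Definition admits_regular_left_order (G : group) : Prop :=
  exists lt : G -> G -> Prop, regular_left_order lt.

Definition admits_one_counter_left_order (G : group) : Prop :=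
  exists lt : G -> G -> Prop, one_counter_left_order lt.

(* Main.v *)
From Stdlib Require Import ZArith Lia ClassicalEpsilon ProofIrrelevance FunctionalExtensionality.
Require Import Defs.
From mathcomp Require Import all_boot.
Set Implicit Arguments. Unset Strict Implicit. Unset Printing Implicit Defensive.

Definition dec (P : Prop) : bool := if excluded_middle_informative P then true else false.
Lemma decP (P : Prop) : reflect P (dec P).
Proof. rewrite /dec; case: excluded_middle_informative => H; constructor => //. Qed.
Lemma decT (P : Prop) : P -> dec P = true.
Proof. by move=> H; apply/decP. Qed.
Lemma decF (P : Prop) : ~ P -> dec P = false.
Proof. by move=> H; apply/decP. Qed.

Section GroupLemmas.
Variable K : group.
Local Notation "x * y" := (gmul x y).
Local Notation "1" := (gone K).
Local Notation "x ^-1" := (ginv x).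
Lemma gmulV (x : K) : x * x^-1 = 1.
Proof.
have e : x^-1^-1 * (x^-1 * x) * x^-1 = x * x^-1.
  by rewrite gmulA gmulVl gmul1l.
by rewrite -e gmulVl -gmulA gmul1l gmulVl.
Qed.
Lemma gmul1r (x : K) : x * 1 = x.
Proof. by rewrite -(gmulVl x) gmulA gmulV gmul1l. Qed.
Lemma gmulK (x y z : K) : x * y = x * z -> y = z.
Proof. by move=> e; rewrite -(gmul1l y) -(gmulVl x) -gmulA e gmulA gmulVl gmul1l. Qed.
Lemma gmulKr (x y z : K) : y * x = z * x -> y = z.
Proof. by move=> e; rewrite -(gmul1r y) -(gmulV x) gmulA e -gmulA gmulV gmul1r. Qed.
Lemma ginv_uniq (x y : K) : x * y = 1 -> y = x^-1.
Proof. by move=> e; apply: (@gmulK x); rewrite e gmulV. Qed.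
Lemma ginv1 : (1 : K)^-1 = 1.
Proof. by symmetry; apply: ginv_uniq; rewrite gmul1l. Qed.
Lemma ginvK (x : K) : x^-1^-1 = x.
Proof. by symmetry; apply: ginv_uniq; rewrite gmulVl. Qed.
Lemma ginvM (x y : K) : (x * y)^-1 = y^-1 * x^-1.
Proof. by symmetry; apply: ginv_uniq; rewrite -gmulA (gmulA y) gmulV gmul1l gmulV. Qed.
Lemma gmulKV (x y : K) : x^-1 * (x * y) = y.
Proof. by rewrite gmulA gmulVl gmul1l. Qed.
Lemma gmulVK (x y : K) : x * (x^-1 * y) = y.
Proof. by rewrite gmulA gmulV gmul1l. Qed.
Lemma gmul_eq1 (x y : K) : x * y = 1 -> y * x = 1.
Proof. by move=> /ginv_uniq ->; rewrite gmulVl. Qed.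
End GroupLemmas.

Lemma hom1 (K H : group) (f : K -> H) : is_hom f -> f (gone K) = gone H.
Proof.
move=> hf; apply: (@gmulK _ (f (gone K))); by rewrite -hf gmul1l gmul1r.
Qed.
Lemma homV (K H : group) (f : K -> H) : is_hom f -> forall x, f (ginv x) = ginv (f x).
Proof. move=> hf x; apply: ginv_uniq; by rewrite -hf gmulV (hom1 hf). Qed.

Section OrderLemmas.
Variables (K : group) (lt : K -> K -> Prop).
Hypothesis hlt : is_left_order lt.
Local Notation "x * y" := (gmul x y).
Local Notation "1" := (gone K).
Lemma lt_irr x : ~ lt x x. Proof. by case: hlt. Qed.
Lemma lt_trans x y z : lt x y -> lt y z -> lt x z. Proof. by case: hlt => _ [h _]; apply: h. Qed.
Lemma lt_tot x y : x = y \/ lt x y \/ lt y x. Proof. by case: hlt => _ [_ [h _]]. Qed.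
Lemma lt_mul g x y : lt x y -> lt (g * x) (g * y). Proof. by case: hlt => _ [_ [_ h]]; apply: h. Qed.
Lemma lt_asym x y : lt x y -> ~ lt y x.
Proof. by move=> h1 h2; apply: (lt_irr (lt_trans h1 h2)). Qed.
Lemma pos_mul a b : lt 1 a -> lt 1 b -> lt 1 (a * b).
Proof. by move=> ha hb; apply: (lt_trans ha); rewrite -{1}(gmul1r a); apply: lt_mul. Qed.
Lemma neg_inv a c : a * c = 1 -> a <> 1 -> (lt a 1 <-> ~ lt c 1).
Proof.
move=> e na; split.
- move=> h hc; have := lt_mul c h; rewrite (gmul_eq1 e) gmul1r => h'.
  exact: lt_asym h' hc.
- move=> hc; case: (lt_tot a 1) => [//|[//|h]].
  have := lt_mul c h; rewrite (gmul_eq1 e) gmul1r => h'.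
  case: (lt_tot c 1) => [ec|[//|//]].
  by move: e; rewrite ec gmul1r.
Qed.
Lemma nonneg_pos a : a <> 1 -> ~ lt a 1 -> lt 1 a.
Proof. by move=> h1 h2; case: (lt_tot a 1) => [//|[//|//]]. Qed.
Lemma pos_ne1 a : lt 1 a -> a <> 1.
Proof. by move=> h e; rewrite e in h; exact: lt_irr h. Qed.
End OrderLemmas.

Inductive freach {S X : Type} (tr : S -> X -> S -> bool) : S -> seq X -> S -> Prop :=
| fr_nil s : freach tr s [::] s
| fr_cons s x s' w s'' : tr s x s' -> freach tr s' w s'' -> freach tr s (x :: w) s''.

Lemma freach_cat S X (tr : S -> X -> S -> bool) s u s' v s'' :
  freach tr s u s' -> freach tr s' v s'' -> freach tr s (u ++ v) s''.
Proof. by elim=> [//|????? h _ IH] hv; econstructor; [exact: h| exact: IH]. Qed.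

Lemma freach_rcons S X (tr : S -> X -> S -> bool) s u x s'' :
  freach tr s (rcons u x) s'' <-> exists s', freach tr s u s' /\ tr s' x s''.
Proof.
split.
- elim: u s => [|y u IH] s /=.
  + move=> h; inversion h; subst. inversion H4; subst. exists s; split => //; constructor.
  + move=> h; inversion h; subst. case: (IH _ H4) => s1 [h1 h2].
    exists s1; split => //; econstructor; eauto.
- case=> s' [h1 h2]; rewrite -cats1; apply: (freach_cat h1).
  econstructor; eauto; constructor.
Qed.

Lemma nfa_freach (Y : finType) (M : nfa Y) p u q :
  nfa_reach p u q <-> freach (@ntrans Y M) p u q.
Proof.
split.
- elim=> [?|????? h _ IH]; [exact: fr_nil| exact: fr_cons h IH].
- elim=> [?|????? h _ IH]; [exact: nfa_nil| exact: nfa_cons h IH].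
Qed.

Set Implicit Arguments. Unset Strict Implicit. Unset Printing Implicit Defensive.

Section Words.
Variables (A B : group) (ltA : A -> A -> Prop) (ltB : B -> B -> Prop).
Hypotheses (hA : is_left_order ltA) (hB : is_left_order ltB).

Definition L := (gcar A + gcar B)%type.
Definition isA (x : L) : bool := if x is inl _ then true else false.
Definition ntriv (x : L) : bool :=
  match x with inl a => ~~ dec (a = gone A) | inr b => ~~ dec (b = gone B) end.
Definition negL (x : L) : bool :=
  match x with inl a => dec (ltA a (gone A)) | inr b => dec (ltB b (gone B)) end.
Definition canc (x y : L) : bool :=
  match x, y with
  | inl a, inl c => dec (gmul a c = gone A)
  | inr a, inr c => dec (gmul a c = gone B)
  | _, _ => false end.
Fixpoint reduced (w : seq L) : bool :=
  match w with
  | [::] => true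
  | x :: w' => [&& ntriv x, (if w' is y :: _ then isA x != isA y else true) & reduced w']
  end.
Definition actA (a : A) (w : seq L) : seq L :=
  match w with
  | inl x :: w' => if dec (gmul a x = gone A) then w' else inl (gmul a x) :: w'
  | _ => if dec (a = gone A) then w else inl a :: w end.
Definition actB (b : B) (w : seq L) : seq L :=
  match w with
  | inr x :: w' => if dec (gmul b x = gone B) then w' else inr (gmul b x) :: w'
  | _ => if dec (b = gone B) then w else inr b :: w end.
Definition actL (x : L) w := match x with inl a => actA a w | inr b => actB b w end.
Definition mulW (u v : seq L) := foldr actL v u.
Definition tau (x : L) : Z := if negL x then (-1)%Z else 0%Z.
Definition b2 (b : bool) : Z := if b then 1%Z else 0%Z.
Fixpoint mW (w : seq L) : Z :=
  match w with
  | [::] => 0%Z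
  | x :: w' => (tau x + (if w' is _ :: _ then b2 (isA x) else 0) + mW w')%Z
  end.
Definition J (u : seq L) : Z := if u is y :: u' then b2 (isA (last y u')) else 0%Z.

Lemma actA_red a w : reduced w -> reduced (actA a w).
Proof.
case: w => [|[x|y] w] /=.
- by case: decP => //= h; rewrite decF.
- case/and3P=> h1 h2 h3; case: decP => h /=; rewrite ?h1 ?h2 ?h3 ?decF //.
- case/and3P=> h1 h2 h3; case: decP => h /=; rewrite ?h1 ?h2 ?h3 ?decF //.
Qed.
Lemma actB_red b w : reduced w -> reduced (actB b w).
Proof.
case: w => [|[y|x] w] /=.
- by case: decP => //= h; rewrite decF.
- case/and3P=> h1 h2 h3; case: decP => h /=; rewrite ?h1 ?h2 ?h3 ?decF //.
- case/and3P=> h1 h2 h3; case: decP => h /=; rewrite ?h1 ?h2 ?h3 ?decF //.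
Qed.
Lemma actL_red x w : reduced w -> reduced (actL x w).
Proof. case: x => ?; [exact: actA_red| exact: actB_red]. Qed.
Lemma mulW_red u v : reduced v -> reduced (mulW u v).
Proof. by elim: u => //= x u IH hv; apply: actL_red; apply: IH. Qed.

Lemma actA_1 w : reduced w -> actA (gone A) w = w.
Proof.
case: w => [|[x|y] w] /= hw; try by rewrite decT.
rewrite gmul1l; case/and3P: hw => /negP h1 _ _; rewrite decF // => e; apply: h1; exact/decP.
Qed.
Lemma actB_1 w : reduced w -> actB (gone B) w = w.
Proof.
case: w => [|[y|x] w] /= hw; try by rewrite decT.
rewrite gmul1l; case/and3P: hw => /negP h1 _ _; rewrite decF // => e; apply: h1; exact/decP.
Qed.

Lemma actA_mul a b w : reduced w -> actA (gmul a b) w = actA a (actA b w).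
Proof.
case: w => [|[x|y] w] /= hw.
- case: (decP (b = gone A)) => [->|hb]; first by rewrite gmul1r.
  by rewrite /=.
- case/and3P: hw => h1 h2 h3.
  case: (decP (gmul b x = gone A)) => [e|e].
  + rewrite -gmulA e gmul1r.
    by case: w h2 {h3} => [|[?|?] ?] //=.
  + by rewrite /= gmulA.
- case: (decP (b = gone A)) => [->|hb]; first by rewrite gmul1r.
  by rewrite /=.
Qed.
Lemma actB_mul a b w : reduced w -> actB (gmul a b) w = actB a (actB b w).
Proof.
case: w => [|[y|x] w] /= hw.
- case: (decP (b = gone B)) => [->|hb]; first by rewrite gmul1r.
  by rewrite /=.
- case: (decP (b = gone B)) => [->|hb]; first by rewrite gmul1r.
  by rewrite /=.
- case/and3P: hw => h1 h2 h3.
  case: (decP (gmul b x = gone B)) => [e|e].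
  + rewrite -gmulA e gmul1r.
    by case: w h2 {h3} => [|[?|?] ?] //=.
  + by rewrite /= gmulA.
Qed.

Lemma b2_ge0 b : (0 <= b2 b)%Z. Proof. by case: b. Qed.
Lemma b2_le1 b : (b2 b <= 1)%Z. Proof. by case: b. Qed.
Lemma mW_cc x y r : mW [:: x, y & r] = (tau x + b2 (isA x) + mW (y :: r))%Z.
Proof. by []. Qed.
Lemma mW_1 x : mW [:: x] = tau x.
Proof. by rewrite /= !Z.add_0_r. Qed.

Lemma actL_nil x : ntriv x -> actL x [::] = [:: x].
Proof. by case: x => a /= /negP h; rewrite decF // => e; apply: h; apply/decP. Qed.
Lemma actL_diff x y r : ntriv x -> isA x != isA y -> actL x (y :: r) = [:: x, y & r].
Proof.
by case: x => a /= /negP h; case: y => //= c _; rewrite decF // => e; apply: h; apply/decP.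
Qed.
Lemma actL_canc x y r : canc x y -> actL x (y :: r) = r.
Proof. by case: x => a; case: y => c //= ->. Qed.
Lemma canc_isA x y : canc x y -> isA x = isA y.
Proof. by case: x => a; case: y. Qed.

Lemma tau_canc x y : ntriv x -> canc x y -> (tau x + tau y = -1)%Z.
Proof.
case: x => a; case: y => c //= /negP h1 /decP e.
- have na : a <> gone A by move=> e'; apply: h1; apply/decP.
  have := neg_inv hA e na; rewrite /tau /=.
  by case: (decP (ltA a _)); case: (decP (ltA c _)) => //; firstorder.
- have na : a <> gone B by move=> e'; apply: h1; apply/decP.
  have := neg_inv hB e na; rewrite /tau /=.
  by case: (decP (ltB a _)); case: (decP (ltB c _)) => //; firstorder.
Qed.

Lemma tau_merge (K : group) (lt : K -> K -> Prop) (hK : is_left_order lt) (a c : K) :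
  a <> gone K -> c <> gone K -> lt (gmul a c) (gone K) -> lt a (gone K) \/ lt c (gone K).
Proof.
move=> na nc h; case: (classic (lt a (gone K))) => ha; first by left.
case: (classic (lt c (gone K))) => hc; first by right.
have := pos_mul hK (nonneg_pos hK na ha) (nonneg_pos hK nc hc) => h'.
by case: (lt_asym hK h h').
Qed.

Lemma actL_same x y r : ntriv x -> ntriv y -> isA x = isA y -> ~~ canc x y ->
  exists z, actL x (y :: r) = z :: r /\ isA z = isA x /\ (tau x + tau y <= tau z)%Z.
Proof.
case: x => a; case: y => c //= /negP h1 /negP h2 _ /negP h3.
- rewrite decF; last by move=> e; apply: h3; apply/decP.
  exists (inl (gmul a c)); split => //; split => //; rewrite /tau /=.
  case: (decP (ltA (gmul a c) _)) => hac; last by do 2 case: decP => _; lia.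
  have [] := tau_merge hA _ _ hac.
  + by move=> e; apply: h1; apply/decP.
  + by move=> e; apply: h2; apply/decP.
  + by move=> h; rewrite decT //; case: decP => _; lia.
  + by move=> h; rewrite (decT h); case: decP => _; lia.
- rewrite decF; last by move=> e; apply: h3; apply/decP.
  exists (inr (gmul a c)); split => //; split => //; rewrite /tau /=.
  case: (decP (ltB (gmul a c) _)) => hac; last by do 2 case: decP => _; lia.
  have [] := tau_merge hB _ _ hac.
  + by move=> e; apply: h1; apply/decP.
  + by move=> e; apply: h2; apply/decP.
  + by move=> h; rewrite decT //; case: decP => _; lia.
  + by move=> h; rewrite (decT h); case: decP => _; lia.
Qed.

Lemma red_cons x v : reduced (x :: v) -> reduced v.
Proof. by case/and3P. Qed.
Lemma red_ntriv x v : reduced (x :: v) -> ntriv x.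
Proof. by case/and3P. Qed.

Lemma NC x u v : reduced (x :: u) -> reduced v ->
  (forall y v', v = y :: v' -> ~~ canc (last x u) y) ->
  exists z r, mulW (x :: u) v = z :: r /\ isA z = isA x /\
    (mW (x :: u) + mW v <= mW (mulW (x :: u) v))%Z.
Proof.
elim: u x => [|x' u IH] x.
- move=> hxu hv hc; have hx := red_ntriv hxu; rewrite /mulW /=.
  case: v hv hc => [|y v] hv hc.
  + rewrite actL_nil //; exists x, [::]; split => //; split => //; rewrite /= ?mW_1; lia.
  + case: (boolP (isA x == isA y)) => hxy.
    * have hy : ntriv y by case/and3P: hv.
      have [z [e [ez ineq]]] := actL_same v hx hy (eqP hxy) (hc _ _ erefl).
      rewrite e; exists z, v; split => //; split => //.
      case: v {hv hc e} => [|w v]; first by rewrite ?mW_1 /=; lia.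
      rewrite !mW_cc ez (eqP hxy); lia.
    * rewrite actL_diff //; exists x, (y :: v); split => //; split => //.
      rewrite mW_cc; have := @b2_ge0 (isA x); lia.
- move=> hu hv hc.
  have hu' : reduced (x' :: u) by case/and3P: hu.
  have [z [r [e [ez ineq]]]] := IH x' hu' hv hc.
  have hxx : isA x != isA x' by case/and3P: hu.
  have hx : ntriv x by case/and3P: hu.
  have -> : mulW [:: x, x' & u] v = actL x (mulW (x' :: u) v) by []. rewrite e actL_diff ?ez //.
  exists x, (z :: r); split => //; split => //.
  rewrite e in ineq.
  rewrite !mW_cc; lia.
Qed.

Lemma mW_rcons u x : mW (rcons u x) = (mW u + tau x + J u)%Z.
Proof.
elim: u => [|y u IH]; first by rewrite /= /J; lia.
case: u IH => [|z u] IH.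
- by rewrite /= !Z.add_0_r /J /=; lia.
- rewrite rcons_cons /= in IH *. rewrite IH /J /=. lia.
Qed.

Lemma reduced_rcons u x : reduced (rcons u x) ->
  [/\ reduced u, ntriv x & forall z u', u = z :: u' -> isA (last z u') != isA x].
Proof.
elim: u => [|y u IH].
  move=> h; split; [done| exact: red_ntriv h| by move=> ? ? []].
rewrite rcons_cons => h; have hr := red_cons h.
have [h1 h2 h3] := IH hr.
case/and3P: h => hy hyu _.
split => //.
- case: u {IH hr h3} hyu h1 => [|w u] hyu h1; first by rewrite /= hy.
  by move: hyu h1; rewrite rcons_cons /= hy => -> ->.
- move=> z u' [<- <-]; case: u {IH hr h1} hyu h3 => [|w u] hyu h3; first by [].
  exact: h3 w u erefl.
Qed.

Lemma J_le u x y : reduced (rcons u x) -> isA x = isA y -> (J u + b2 (isA y) <= 1)%Z.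
Proof.
case: u => [|z u]; first by move=> _ _; rewrite /J; have := @b2_le1 (isA y); lia.
move=> /reduced_rcons [_ _ /(_ z u erefl)] h e; rewrite -e.
rewrite /J; by case: (isA (last z u)) h; case: (isA x).
Qed.


Lemma mulW_rcons u x v : mulW (rcons u x) v = mulW u (actL x v).
Proof. by rewrite /mulW foldr_rcons. Qed.

Lemma NC' u x v : reduced (rcons u x) -> reduced v ->
  (forall y v', v = y :: v' -> ~~ canc x y) ->
  exists z r, mulW (rcons u x) v = z :: r /\
    (mW (rcons u x) + mW v <= mW (mulW (rcons u x) v))%Z.
Proof.
case: u => [|x0 u] hu hv hc.
- by have [z [r [e [_ h]]]] := NC hu hv hc; exists z, r.
- rewrite rcons_cons in hu *.
  have hc' : forall y v', v = y :: v' -> ~~ canc (last x0 (rcons u x)) y.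
    by rewrite last_rcons.
  by have [z [r [e [_ h]]]] := NC hu hv hc'; exists z, r.
Qed.

Lemma QM u v : reduced u -> reduced v -> (mW u + mW v <= mW (mulW u v))%Z.
Proof.
elim/last_ind: u v => [|u x IH] v hu hv; first by rewrite /=; lia.
case: v hv => [|y v] hv.
- by have [z [r [_ h]]] := NC' hu hv (fun _ _ e => ltac:(done)).
case: (boolP (canc x y)) => hxy; last first.
  by have [z [r [_ h]]] := NC' hu hv (fun y' v' e => ltac:(by case: e => <- _)).
rewrite mulW_rcons actL_canc //.
have [hu0 hx _] := reduced_rcons hu.
have := IH v hu0 (red_cons hv).
rewrite mW_rcons.
have := tau_canc hx hxy.
have := J_le hu (canc_isA hxy).
have := @b2_ge0 (isA y).
case: v {hv IH} => [|w v] /=; first by rewrite /J; lia.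
lia.
Qed.

Lemma INV u v : reduced u -> reduced v -> u <> [::] -> mulW u v = [::] ->
  (mW u + mW v = -1)%Z.
Proof.
elim/last_ind: u v => [|u x IH] v hu hv; first by [].
move=> _.
case: v hv => [|y v] hv.
- by have [z [r [-> _]]] := NC' hu hv (fun _ _ e => ltac:(done)).
case: (boolP (canc x y)) => hxy; last first.
  by have [z [r [-> _]]] := NC' hu hv (fun y' v' e => ltac:(by case: e => <- _)).
rewrite mulW_rcons actL_canc // => e.
have [hu0 hx hl] := reduced_rcons hu.
rewrite mW_rcons.
have := tau_canc hx hxy.
case: u hu hu0 hl IH e => [|x0 u] hu hu0 hl IH e.
- rewrite /mulW /= in e; subst v; rewrite /J /=; lia.
- have hv0 : v <> [::].
    move=> ev; subst v.
    have [z [r [e' _]]] := NC (hu0) (isT : reduced [::]) (fun _ _ e => ltac:(done)).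
    by rewrite e' in e.
  have := IH v hu0 (red_cons hv) ltac:(done) e.
  have := hl x0 u erefl; rewrite (canc_isA hxy) /J.
  case: v {hv IH e} hv0 => [|w v] // _.
  rewrite mW_cc.
  case: (isA (last x0 u)); case: (isA y) => //= _; lia.
Qed.
End Words.

Set Implicit Arguments. Unset Strict Implicit. Unset Printing Implicit Defensive.

Lemma sig_eq (T : Type) (P : T -> Prop) (x y : {t : T | P t}) :
  proj1_sig x = proj1_sig y -> x = y.
Proof.
case: x => x px; case: y => y py /= e; subst y.
by rewrite (proof_irrelevance _ px py).
Qed.

Section Gen.
Variables (A B G : group) (iA : A -> G) (iB : B -> G).
Hypothesis Hfp : is_free_product iA iB.
Variable S : G -> Prop.
Hypotheses (S1 : S (gone G)) (SM : forall x y, S x -> S y -> S (gmul x y))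
  (SV : forall x, S x -> S (ginv x)) (SA : forall a, S (iA a)) (SB : forall b, S (iB b)).

Definition HS_car := {g : G | S g}.
Definition HS_mul (x y : HS_car) : HS_car :=
  exist _ (gmul (proj1_sig x) (proj1_sig y)) (SM (proj2_sig x) (proj2_sig y)).
Definition HS_one : HS_car := exist _ (gone G) S1.
Definition HS_inv (x : HS_car) : HS_car := exist _ (ginv (proj1_sig x)) (SV (proj2_sig x)).
Lemma HS_mulA x y z : HS_mul x (HS_mul y z) = HS_mul (HS_mul x y) z.
Proof. by apply: sig_eq; rewrite /= gmulA. Qed.
Lemma HS_mul1l x : HS_mul HS_one x = x.
Proof. by apply: sig_eq; rewrite /= gmul1l. Qed.
Lemma HS_mulVl x : HS_mul (HS_inv x) x = HS_one.
Proof. by apply: sig_eq; rewrite /= gmulVl. Qed.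
Definition HS : group := @Defs.Group HS_car HS_mul HS_one HS_inv HS_mulA HS_mul1l HS_mulVl.

Lemma gen_all g : S g.
Proof.
case: Hfp => hA [hB U].
pose fA (a : A) : HS := exist _ (iA a) (SA a).
pose fB (b : B) : HS := exist _ (iB b) (SB b).
have hfA : is_hom fA by move=> x y; apply: sig_eq; rewrite /= hA.
have hfB : is_hom fB by move=> x y; apply: sig_eq; rewrite /= hB.
case: (U HS fA fB hfA hfB) => [[F [hF [FA FB]]] _].
case: (U G iA iB hA hB) => _ uniq.
have e : forall x, proj1_sig (F x) = x.
  apply: (uniq (fun x => proj1_sig (F x)) id).
  - by move=> x y; rewrite hF.
  - by [].
  - by move=> a; rewrite FA.
  - by move=> b; rewrite FB.
by rewrite -(e g); exact: proj2_sig.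
Qed.
End Gen.

Section FP.
Variables (A B G : group) (iA : A -> G) (iB : B -> G).
Hypothesis Hfp : is_free_product iA iB.

Definition W := {w : seq (L A B) | reduced w}.
Definition Perm := {p : (W -> W) * (W -> W) | (forall x, p.2 (p.1 x) = x) /\ (forall x, p.1 (p.2 x) = x)}.
Lemma perm_eq (p q : Perm) : (forall x, (proj1_sig p).1 x = (proj1_sig q).1 x) ->
  (forall x, (proj1_sig p).2 x = (proj1_sig q).2 x) -> p = q.
Proof.
case: p => [[p1 p2] hp]; case: q => [[q1 q2] hq] /= e1 e2.
have E1 : p1 = q1 by apply: functional_extensionality.
have E2 : p2 = q2 by apply: functional_extensionality.
subst q1 q2; by rewrite (proof_irrelevance _ hp hq).
Qed.
Definition pmul (p q : Perm) : Perm.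
Proof.
refine (exist _ (fun x => (proj1_sig p).1 ((proj1_sig q).1 x), fun x => (proj1_sig q).2 ((proj1_sig p).2 x)) _).
case: p => [[p1 p2] [hp1 hp2]]; case: q => [[q1 q2] [hq1 hq2]] /=.
by split => x /=; [rewrite (hp1 (q1 x) : p2 (p1 (q1 x)) = _) (hq1 x : q2 (q1 x) = _) | rewrite (hq2 (p2 x) : q1 (q2 (p2 x)) = _) (hp2 x : p1 (p2 x) = _)].
Defined.
Definition pone : Perm := exist _ (id, id) (conj (fun x => erefl) (fun x => erefl)).
Definition pinv (p : Perm) : Perm.
Proof.
refine (exist _ ((proj1_sig p).2, (proj1_sig p).1) _).
case: p => [[p1 p2] [hp1 hp2]] /=; by split.
Defined.
Lemma pmulA x y z : pmul x (pmul y z) = pmul (pmul x y) z.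
Proof. by apply: perm_eq. Qed.
Lemma pmul1l x : pmul pone x = x.
Proof. by apply: perm_eq. Qed.
Lemma pmulVl x : pmul (pinv x) x = pone.
Proof. by apply: perm_eq => w; case: x => [[p1 p2] [hp1 hp2]] /=. Qed.
Definition Sym : group := @Defs.Group Perm pmul pone pinv pmulA pmul1l pmulVl.

Definition wA (a : A) (w : W) : W := exist _ (actA a (proj1_sig w)) (actA_red a (proj2_sig w)).
Definition wB (b : B) (w : W) : W := exist _ (actB b (proj1_sig w)) (actB_red b (proj2_sig w)).
Lemma wA_inv a w : wA (ginv a) (wA a w) = w.
Proof.
apply: sig_eq => /=; rewrite -(actA_mul _ _ (proj2_sig w)) gmulVl (actA_1 (proj2_sig w)) //.
Qed.
Lemma wB_inv a w : wB (ginv a) (wB a w) = w.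
Proof.
apply: sig_eq => /=; rewrite -(actB_mul _ _ (proj2_sig w)) gmulVl (actB_1 (proj2_sig w)) //.
Qed.
Definition pA (a : A) : Sym.
Proof.
refine (exist _ (wA a, wA (ginv a)) _); split => x /=; first exact: wA_inv.
by rewrite -{1}(ginvK a) wA_inv.
Defined.
Definition pB (b : B) : Sym.
Proof.
refine (exist _ (wB b, wB (ginv b)) _); split => x /=; first exact: wB_inv.
by rewrite -{1}(ginvK b) wB_inv.
Defined.
Lemma pA_hom : is_hom pA.
Proof.
move=> a b; apply: perm_eq => w; apply: sig_eq => /=.
- by rewrite (actA_mul _ _ (proj2_sig w)).
- by rewrite ginvM (actA_mul _ _ (proj2_sig w)).
Qed.
Lemma pB_hom : is_hom pB.
Proof.
move=> a b; apply: perm_eq => w; apply: sig_eq => /=.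
- by rewrite (actB_mul _ _ (proj2_sig w)).
- by rewrite ginvM (actB_mul _ _ (proj2_sig w)).
Qed.

Variable f : G -> Sym.
Hypotheses (hf : is_hom f) (hfA : forall a, f (iA a) = pA a) (hfB : forall b, f (iB b) = pB b).

Definition app (p : Sym) (w : W) : W := (proj1_sig p).1 w.
Definition eps : W := exist _ [::] isT.
Definition ev (g : G) : seq (L A B) := proj1_sig (app (f g) eps).
Definition iota (x : L A B) : G := match x with inl a => iA a | inr b => iB b end.
Definition rho (w : seq (L A B)) : G := foldr (fun x acc => gmul (iota x) acc) (gone G) w.

Lemma app_mul g h w : app (f (gmul g h)) w = app (f g) (app (f h) w).
Proof. by rewrite /app hf. Qed.
Lemma app_one w : app (f (gone G)) w = w.
Proof. by rewrite /app (hom1 hf). Qed.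
Lemma app_iota x w : proj1_sig (app (f (iota x)) w) = actL x (proj1_sig w).
Proof. by case: x => a; rewrite /app /= ?hfA ?hfB. Qed.

Lemma iA1 : iA (gone A) = gone G.
Proof. by case: Hfp => hA _; exact: hom1 hA. Qed.
Lemma iB1 : iB (gone B) = gone G.
Proof. by case: Hfp => _ [hB _]; exact: hom1 hB. Qed.
Lemma iAM a b : iA (gmul a b) = gmul (iA a) (iA b).
Proof. by case: Hfp => hA _; exact: hA. Qed.
Lemma iBM a b : iB (gmul a b) = gmul (iB a) (iB b).
Proof. by case: Hfp => _ [hB _]; exact: hB. Qed.

Lemma rho_act x w : rho (actL x w) = gmul (iota x) (rho w).
Proof.
case: x => a.
- case: w => [|[c|c] w] /=.
  + by case: decP => [->|_] //=; rewrite iA1 gmul1l.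
  + case: decP => [e|_] /=; last by rewrite iAM gmulA.
    by rewrite gmulA -iAM e iA1 gmul1l.
  + by case: decP => [->|_] //=; rewrite iA1 gmul1l.
- case: w => [|[c|c] w] /=.
  + by case: decP => [->|_] //=; rewrite iB1 gmul1l.
  + by case: decP => [->|_] //=; rewrite iB1 gmul1l.
  + case: decP => [e|_] /=; last by rewrite iBM gmulA.
    by rewrite gmulA -iBM e iB1 gmul1l.
Qed.

Lemma key g w : rho (proj1_sig (app (f g) w)) = gmul g (rho (proj1_sig w)).
Proof.
move: g w; apply: (gen_all Hfp (S := fun g => forall w, rho (proj1_sig (app (f g) w)) = gmul g (rho (proj1_sig w)))).
- by move=> w; rewrite app_one gmul1l.
- by move=> x y hx hy w; rewrite app_mul hx hy gmulA.
- move=> x hx w.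
  rewrite -{1}(gmulKV x (rho _)) -hx -app_mul gmulV app_one //.
- by move=> a w; rewrite (app_iota (inl a)) rho_act.
- by move=> b w; rewrite (app_iota (inr b)) rho_act.
Qed.

Lemma rho_ev g : rho (ev g) = g.
Proof. by rewrite /ev key /= gmul1r. Qed.
Lemma ev_red g : reduced (ev g).
Proof. exact: (proj2_sig (app (f g) eps)). Qed.
Lemma ev_inj g h : ev g = ev h -> g = h.
Proof. by move=> e; rewrite -(rho_ev g) e rho_ev. Qed.
Lemma ev_one : ev (gone G) = [::].
Proof. by rewrite /ev app_one. Qed.

Lemma app_rho u w : proj1_sig (app (f (rho u)) w) = mulW u (proj1_sig w).
Proof.
elim: u w => [|x u IH] w /=; first by rewrite app_one.
by rewrite app_mul app_iota IH.
Qed.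
Lemma ev_mul g h : ev (gmul g h) = mulW (ev g) (ev h).
Proof. by rewrite {1}/ev app_mul -{1}(rho_ev g) app_rho. Qed.

Lemma ev_rho w : reduced w -> ev (rho w) = w.
Proof.
elim: w => [|x w IH] hw; first by rewrite ev_one.
rewrite /= ev_mul.
have -> : ev (iota x) = [:: x].
  rewrite /ev app_iota /=.
  exact: (actL_nil (red_ntriv hw)).
rewrite IH ?(red_cons hw) // /mulW /=.
case: w hw {IH} => [|y w] hw; first exact: actL_nil (red_ntriv hw).
by rewrite actL_diff //; [exact: red_ntriv hw| case/and3P: hw].
Qed.
End FP.

Set Implicit Arguments. Unset Strict Implicit. Unset Printing Implicit Defensive.

Section Factor.
Variables (K G : group) (ltK : K -> K -> Prop) (hK : is_left_order ltK).
Variables (Y : finType) (piK : seq Y -> K) (hpiK : is_monoid_hom piK) (M : nfa Y)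
  (hM : image_is_cone ltK piK (nfa_accepts M)).
Variables (X : finType) (e1 e2 : Y -> X) (kap : K -> G) (hkap : is_hom kap).
Variables (piX : seq X -> G) (hpiX : is_monoid_hom piX)
  (he1 : forall y, piX [:: e1 y] = kap (piK [:: y]))
  (he2 : forall y, piX [:: e2 y] = ginv (kap (piK [:: y]))).

Definition FS : finType := (nstate M + option (nstate M))%type.
Definition Ftr (s : FS) (x : X) (s' : FS) : bool :=
  match s, s' with
  | inl q, inl q' => [exists y, (x == e1 y) && ntrans q y q']
  | inr None, inr (Some q) => [exists y, (x == e2 y) && [exists f, nfinal f && ntrans q y f]]
  | inr (Some q), inr (Some q') => [exists y, (x == e2 y) && ntrans q' y q]
  | _, _ => false end.
Definition Ffinal (s : FS) : bool :=
  match s with inl q => nfinal q | inr (Some q) => q == nstart M | inr None => false end.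
Definition Fstart (n : bool) : FS := if n then inr None else inl (nstart M).
Definition Fside (s : FS) : bool := if s is inr _ then true else false.

Lemma Ftr_side s x s' : Ftr s x s' -> Fside s' = Fside s.
Proof. by case: s => [?|[?|]]; case: s' => [?|[?|]]. Qed.
Lemma freach_side s w s' : freach Ftr s w s' -> Fside s' = Fside s.
Proof. by elim=> // ????? h _ ->; exact: Ftr_side h. Qed.

Lemma piX_cat u v : piX (u ++ v) = gmul (piX u) (piX v).
Proof. by case: hpiX. Qed.
Lemma piX_cons x u : piX (x :: u) = gmul (piX [:: x]) (piX u).
Proof. by rewrite -piX_cat. Qed.
Lemma piX_nil : piX [::] = gone G.
Proof. by case: hpiX. Qed.
Lemma piK_cat u v : piK (u ++ v) = gmul (piK u) (piK v).
Proof. by case: hpiK. Qed.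
Lemma piK_nil : piK [::] = gone K.
Proof. by case: hpiK. Qed.

Lemma piX_e1 u : piX (map e1 u) = kap (piK u).
Proof.
elim: u => [|y u IH] /=; first by rewrite piX_nil piK_nil (hom1 hkap).
by rewrite piX_cons he1 IH -hkap -piK_cat.
Qed.
Lemma piX_e2 u : piX (map e2 u) = ginv (kap (piK (rev u))).
Proof.
elim: u => [|y u IH] /=; first by rewrite piX_nil piK_nil (hom1 hkap) ginv1.
by rewrite piX_cons he2 IH -ginvM -hkap -piK_cat rev_cons cats1.
Qed.

Lemma unlift_gen s w s' : freach Ftr s w s' ->
  (forall p, s = inl p -> exists u q, w = map e1 u /\ s' = inl q /\ freach (@ntrans _ M) p u q) /\
  (forall q, s = inr (Some q) -> exists u p, w = map e2 u /\ s' = inr (Some p) /\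
      freach (@ntrans _ M) p (rev u) q).
Proof.
elim=> [s0|s0 x s1 w0 s2 h _ [IH1 IH2]].
- split=> p ->; exists [::]; exists p; split => //; split => //; exact: fr_nil.
- split.
  + move=> p e; subst s0; case: s1 h IH1 IH2 => [q1|[q1|]] //= /existsP [y /andP [/eqP -> hy]] IH1 _.
    have [u [q [-> [-> hr]]]] := IH1 q1 erefl.
    by exists (y :: u), q; split => //; split => //; apply: fr_cons hy hr.
  + move=> q e; subst s0; case: s1 h IH1 IH2 => [q1|[q1|]] //= /existsP [y /andP [/eqP -> hy]] _ IH2.
    have [u [p [-> [-> hr]]]] := IH2 q1 erefl.
    exists (y :: u), p; split => //; split => //.
    by rewrite rev_cons; apply/freach_rcons; exists q1.
Qed.

Lemma lift1 p u q : freach (@ntrans _ M) p u q -> freach Ftr (inl p) (map e1 u) (inl q).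
Proof.
elim=> [?|p0 y p1 u0 q0 h _ IH] /=; first exact: fr_nil.
apply: fr_cons IH; apply/existsP; exists y; by rewrite eqxx h.
Qed.
Lemma liftrev p u q : freach (@ntrans _ M) p u q ->
  freach Ftr (inr (Some q)) (map e2 (rev u)) (inr (Some p)).
Proof.
elim=> [?|p0 y p1 u0 q0 h _ IH] /=; first exact: fr_nil.
rewrite rev_cons map_rcons; apply/freach_rcons; exists (inr (Some p1)); split => //.
apply/existsP; exists y; by rewrite eqxx h.
Qed.

Lemma Fsound n w s : freach Ftr (Fstart n) w s -> Ffinal s ->
  exists k, k <> gone K /\ dec (ltK k (gone K)) = n /\ piX w = kap k.
Proof.
case: n => /=.
- case: w => [|x w] h.
    by inversion h; subst.
  inversion h; subst => hf.
  case: s' H2 H4 => [q1|[q1|]] //= /existsP [y /andP [/eqP -> /existsP [f /andP [hf' hy]]]] hr.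
  have [u [p [-> [es hr']]]] := (unlift_gen hr).2 q1 erefl.
  subst s; move/eqP: hf => ep; subst p.
  have acc : nfa_accepts M (rcons (rev u) y).
    exists f; split => //; apply/nfa_freach/freach_rcons; by exists q1.
  have pos := hM.1 _ acc.
  set p := piK (rcons (rev u) y) in pos.
  exists (ginv p); split; last split.
  + by move=> e; apply: (pos_ne1 hK pos); rewrite -(ginvK p) e ginv1.
  + apply: decT; have := lt_mul hK (ginv p) pos; by rewrite gmul1r gmulVl.
  + rewrite -/(map e2 (y :: u)) piX_e2 (homV hkap) rev_cons.
    by rewrite /p.
- move=> h hf; have [u [q [-> [es hr]]]] := (unlift_gen h).1 _ erefl.
  subst s; have acc : nfa_accepts M u by exists q; split => //; apply/nfa_freach.
  have pos : ltK (gone K) (piK u) := hM.1 _ acc.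
  exists (piK u); split; last split.
  + exact: (pos_ne1 hK pos).
  + by apply: decF => h'; apply: (lt_asym hK pos h').
  + exact: piX_e1.
Qed.

Lemma Fcomplete k : k <> gone K ->
  exists w s, freach Ftr (Fstart (dec (ltK k (gone K)))) w s /\ Ffinal s /\ piX w = kap k.
Proof.
move=> nk; case: decP => hk /=.
- have pos : ltK (gone K) (ginv k) by have := lt_mul hK (ginv k) hk; rewrite gmul1r gmulVl.
  have [u [[f [hu hf]] eu]] := hM.2 _ pos.
  move/nfa_freach: hu.
  case/lastP: u eu => [|u y] eu.
    by rewrite piK_nil in eu; move: pos; rewrite -eu => /(lt_irr hK).
  case/freach_rcons => q1 [hr hy].
  exists (e2 y :: map e2 (rev u)), (inr (Some (nstart M))); split; last split => //.
  + apply: fr_cons (liftrev hr); apply/existsP; exists y; rewrite eqxx /=.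
    by apply/existsP; exists f; rewrite hf hy.
  + by rewrite /= eqxx.
  + by rewrite (_ : e2 y :: map e2 (rev u) = map e2 (y :: rev u)) // piX_e2 rev_cons revK eu (homV hkap) ginvK.
- have pos := nonneg_pos hK nk hk.
  have [u [[f [hu hf]] eu]] := hM.2 _ pos.
  exists (map e1 u), (inl f); split; last split => //.
  + by apply: lift1; apply/nfa_freach.
  + by rewrite piX_e1 eu.
Qed.
End Factor.

Set Implicit Arguments. Unset Strict Implicit. Unset Printing Implicit Defensive.

Section Main.
Variables (A B G : group) (iA : A -> G) (iB : B -> G).
Hypothesis Hfp : is_free_product iA iB.
Variables (ltA : A -> A -> Prop) (hA : is_left_order ltA) (YA : finType) (piA : seq YA -> A)
  (hpiA : is_monoid_hom piA) (spiA : forall a, exists w, piA w = a) (MA : nfa YA)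
  (hMA : image_is_cone ltA piA (nfa_accepts MA)).
Variables (ltB : B -> B -> Prop) (hB : is_left_order ltB) (YB : finType) (piB : seq YB -> B)
  (hpiB : is_monoid_hom piB) (spiB : forall b, exists w, piB w = b) (MB : nfa YB)
  (hMB : image_is_cone ltB piB (nfa_accepts MB)).
Variable f : G -> Sym A B.
Hypotheses (hf : is_hom f) (hfA : forall a, f (iA a) = pA B a) (hfB : forall b, f (iB b) = pB A b).

Lemma homA : is_hom iA. Proof. by case: Hfp. Qed.
Lemma homB : is_hom iB. Proof. by case: Hfp => _ []. Qed.

Definition X : finType := ((YA + YA) + (YB + YB))%type.
Definition letv (x : X) : G :=
  match x with
  | inl (inl y) => iA (piA [:: y])
  | inl (inr y) => ginv (iA (piA [:: y]))
  | inr (inl y) => iB (piB [:: y])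
  | inr (inr y) => ginv (iB (piB [:: y])) end.
Definition piX (w : seq X) : G := foldr (fun x acc => gmul (letv x) acc) (gone G) w.
Lemma hpiX : is_monoid_hom piX.
Proof. split => // u v; elim: u => [|x u IH] /=; by rewrite ?gmul1l ?IH ?gmulA. Qed.

Definition e1A (y : YA) : X := inl (inl y).
Definition e2A (y : YA) : X := inl (inr y).
Definition e1B (y : YB) : X := inr (inl y).
Definition e2B (y : YB) : X := inr (inr y).
Lemma he1A y : piX [:: e1A y] = iA (piA [:: y]). Proof. by rewrite /= gmul1r. Qed.
Lemma he2A y : piX [:: e2A y] = ginv (iA (piA [:: y])). Proof. by rewrite /= gmul1r. Qed.
Lemma he1B y : piX [:: e1B y] = iB (piB [:: y]). Proof. by rewrite /= gmul1r. Qed.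
Lemma he2B y : piX [:: e2B y] = ginv (iB (piB [:: y])). Proof. by rewrite /= gmul1r. Qed.

Definition S : finType := (FS MA + FS MB)%type.
Definition Btr (s : S) (x : X) (s' : S) : bool :=
  match s, s' with
  | inl s, inl s' => Ftr e1A e2A s x s'
  | inr s, inr s' => Ftr e1B e2B s x s'
  | _, _ => false end.
Definition Bfinal (s : S) : bool := match s with inl s => Ffinal s | inr s => Ffinal s end.
Definition Bstart (t : bool * bool) : S :=
  if t.1 then inr (Fstart MB t.2) else inl (Fstart MA t.2).
Definition typ (s : S) : bool * bool :=
  match s with inl s => (false, Fside s) | inr s => (true, Fside s) end.

Lemma typ_Bstart t : typ (Bstart t) = t.
Proof. by case: t => [[] []]. Qed.
Lemma Btr_typ s x s' : Btr s x s' -> typ s' = typ s.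
Proof.
case: s => s; case: s' => s' //= h; by rewrite (Ftr_side h).
Qed.
Lemma freach_typ s w s' : freach Btr s w s' -> typ s' = typ s.
Proof. by elim=> // ????? h _ ->; exact: Btr_typ h. Qed.

Lemma B_unl s w s' : freach Btr s w s' ->
  (forall a, s = inl a -> exists a', s' = inl a' /\ freach (Ftr e1A e2A) a w a') /\
  (forall b, s = inr b -> exists b', s' = inr b' /\ freach (Ftr e1B e2B) b w b').
Proof.
elim=> [s0|s0 x s1 w0 s2 h _ [IH1 IH2]].
- by split=> p ->; exists p; split => //; exact: fr_nil.
- split => p e; subst s0; case: s1 h IH1 IH2 => s1 //= h IH1 IH2.
  + by have [a' [-> h']] := IH1 s1 erefl; exists a'; split => //; exact: fr_cons h h'.
  + by have [a' [-> h']] := IH2 s1 erefl; exists a'; split => //; exact: fr_cons h h'.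
Qed.
Lemma B_liftA s w s' : freach (Ftr e1A e2A) s w s' -> freach Btr (inl s) w (inl s').
Proof. elim=> [?|????? h _ IH]; [exact: fr_nil| exact: fr_cons IH]. Qed.
Lemma B_liftB s w s' : freach (Ftr e1B e2B) s w s' -> freach Btr (inr s) w (inr s').
Proof. elim=> [?|????? h _ IH]; [exact: fr_nil| exact: fr_cons IH]. Qed.

Definition LL := L A B.
Definition typL (x : LL) : bool * bool := (~~ isA x, negL ltA ltB x).
Definition iot (x : LL) : G := iota iA iB x.

Lemma block_sound t w s : freach Btr (Bstart t) w s -> Bfinal s ->
  exists x, ntriv x /\ typL x = t /\ piX w = iot x.
Proof.
case: t => [[] n] /= h hs.
- have [b' [es h']] := (B_unl h).2 _ erefl; subst s.
  have [k [nk [ek ew]]] := Fsound hB hpiB hMB homB hpiX he1B he2B h' hs.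
  exists (inr k); split; last split => //.
  + by rewrite /= decF.
  + by rewrite /typL /= ek.
- have [b' [es h']] := (B_unl h).1 _ erefl; subst s.
  have [k [nk [ek ew]]] := Fsound hA hpiA hMA homA hpiX he1A he2A h' hs.
  exists (inl k); split; last split => //.
  + by rewrite /= decF.
  + by rewrite /typL /= ek.
Qed.

Lemma block_complete x : ntriv x ->
  exists w s, freach Btr (Bstart (typL x)) w s /\ Bfinal s /\ piX w = iot x.
Proof.
case: x => k /= /negP nk.
- have nk' : k <> gone A by move=> e; apply: nk; apply/decP.
  have [w [s [h [hs ew]]]] := Fcomplete hA hpiA hMA homA hpiX he1A he2A nk'.
  by exists w, (inl s); split => //; exact: B_liftA.
- have nk' : k <> gone B by move=> e; apply: nk; apply/decP.
  have [w [s [h [hs ew]]]] := Fcomplete hB hpiB hMB homB hpiX he1B he2B nk'.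
  by exists w, (inr s); split => //; exact: B_liftB.
Qed.

Definition Q : finType := option (S * bool)%type.
Definition valc (b : bool) (n : nat) : Z := if b then (- Z.of_nat n)%Z else Z.of_nat n.
Definition delta (t' : bool * bool) : Z := ((if t'.2 then -1 else 0) + (if t'.1 then 1 else 0))%Z.
Definition delta0 (t' : bool * bool) : Z := if t'.2 then (-1)%Z else 0%Z.
Definition adj (b z : bool) (d : Z) : bool * nat :=
  match d with
  | Z0 => (b, if z then 0 else 1)
  | Zpos _ => if b then (if z then (false, 1) else (true, 0)) else (false, if z then 1 else 2)
  | Zneg _ => if b then (true, if z then 1 else 2) else (if z then (true, 1) else (false, 0))
  end.

Lemma adj_spec b n d : (d = -1 \/ d = 0 \/ d = 1)%Z ->
  valc (adj b (n == 0) d).1 (if n == 0 then (adj b (n == 0) d).2 else n.-1 + (adj b (n == 0) d).2)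
    = (valc b n + d)%Z /\ (adj b (n == 0) d).2 < 3.
Proof.
case=> [->|[->|->]]; case: b; case: n => [|n]; rewrite /valc ?Nat2Z.inj_succ /=; split => //; rewrite -?plusE; lia.
Qed.
Lemma delta_range t : (delta t = -1 \/ delta t = 0 \/ delta t = 1)%Z.
Proof. by case: t => [[] []]; rewrite /delta /=; lia. Qed.
Lemma delta0_range t : (delta0 t = -1 \/ delta0 t = 0 \/ delta0 t = 1)%Z.
Proof. by case: t => [? []]; rewrite /delta0 /=; lia. Qed.

Definition tr (t : Q * option X * bool * Q * nat) : bool :=
  let: (q, a, z, q', k) := t in
  match q, a, q' with
  | Some (s, b), Some x, Some (s', b') => [&& b' == b, Btr s x s' & k == (if z then 0 else 1)]
  | Some (s, b), None, Some (s', b') =>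
      (Bfinal s && [exists t' : bool * bool, [&& s' == Bstart t', t'.1 != (typ s).1 &
                                                 (b', k) == adj b z (delta t')]])
      || [&& b, z, s' == s, ~~ b' & k == 0]
  | None, None, Some (s', b') =>
      z && [exists t' : bool * bool, (s' == Bstart t') && ((b', k) == adj false true (delta0 t'))]
  | _, _, _ => false end.

Definition otransL : seq (Q * option X * bool * Q * nat) :=
  [seq t <- [seq (p.1, nat_of_ord p.2) | p <- enum {: (Q * option X * bool * Q) * 'I_3}] | tr t].
Definition ofin (q : Q) : bool := match q with Some (s, false) => Bfinal s | _ => false end.
Definition Moca : oca X := @Defs.OCA X Q None ofin otransL.

Lemma otr_mem t : t \in otransL -> tr t.
Proof. by rewrite mem_filter => /andP []. Qed.
Lemma mem_otr t : tr t -> t.2 < 3 -> t \in otransL.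
Proof.
case: t => p k ht hk; rewrite mem_filter ht /=.
apply/mapP; exists (p, Ordinal hk) => //; by rewrite mem_enum.
Qed.

Lemma tr_eps_spec q z q' k : tr (q, None, z, q', k) ->
  (exists s b s' b' t', q = Some (s, b) /\ q' = Some (s', b') /\ Bfinal s /\ s' = Bstart t' /\
      t'.1 != (typ s).1 /\ (b', k) = adj b z (delta t'))
  \/ (exists s, q = Some (s, true) /\ q' = Some (s, false) /\ z = true /\ k = 0)
  \/ (exists s' b' t', q = None /\ q' = Some (s', b') /\ z = true /\ s' = Bstart t' /\
      (b', k) = adj false true (delta0 t')).
Proof.
case: q => [[s b]|]; case: q' => [[s' b']|] //=.
- case/orP.
  + case/andP=> hs /existsP [t' /and3P [/eqP e1 e2 /eqP e3]].
    by left; exists s, b, s', b', t'.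
  + case/and5P=> -> -> /eqP -> /negPf -> /eqP ->.
    by right; left; exists s.
- case/andP=> -> /existsP [t' /andP [/eqP e1 /eqP e2]].
  by right; right; exists s', b', t'.
Qed.
Lemma tr_read_spec q x z q' k : tr (q, Some x, z, q', k) ->
  exists s b s', q = Some (s, b) /\ q' = Some (s', b) /\ Btr s x s' /\ k = (if z then 0 else 1).
Proof.
case: q => [[s b]|]; case: q' => [[s' b']|] //=.
by case/and3P => /eqP -> h /eqP ->; exists s, b, s'.
Qed.

Inductive Blocks : bool * bool -> Z -> seq X -> Prop :=
| bl_end t v : (0 <= v)%Z -> Blocks t v [::]
| bl_next t t' v w0 s w : t'.1 != t.1 -> freach Btr (Bstart t') w0 s -> Bfinal s ->
    Blocks t' (v + delta t')%Z w -> Blocks t v (w0 ++ w).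

Definition Inv (q : Q) (n : nat) (w : seq X) : Prop :=
  match q with
  | None => exists t w0 s w1, w = w0 ++ w1 /\ freach Btr (Bstart t) w0 s /\ Bfinal s /\
      Blocks t (delta0 t) w1
  | Some (s, b) => exists w0 s' w1, w = w0 ++ w1 /\ freach Btr s w0 s' /\ Bfinal s' /\
      Blocks (typ s) (valc b n) w1
  end.

Lemma inv_reach q n w q' n' : @oca_reach X Moca q n w q' n' -> ofin q' -> Inv q n w.
Proof.
elim=> [q0 n0 | q0 n0 q1 n1 w0 q2 n2 hs _ IH | q0 n0 x q1 n1 w0 q2 n2 hs _ IH] hfin.
- case: q0 hfin => [[s []]|] //= hfin.
  exists [::], s, [::]; split => //; split; first exact: fr_nil.
  by split => //; apply: bl_end; rewrite /valc; lia.
- have {}IH := IH hfin.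
  case: hs => z [k [hin [ez en]]].
  case: (tr_eps_spec (otr_mem hin)).
  + move=> [s [b [s' [b' [t' [e0 [e1 [hs [es [ht ea]]]]]]]]]]; subst q0 q1 s'.
    case: IH => w1 [s'' [w2 [ew [hr [hs'' hb]]]]].
    exists [::], s, w0; split => //; split; first exact: fr_nil.
    split => //; rewrite ew; apply: (bl_next ht hr hs'').
    rewrite typ_Bstart in hb.
    have := adj_spec b n0 (delta_range t'); rewrite -ez -ea /= => [[<- _]].
    by rewrite -en.
  + case.
    * move=> [s [e0 [e1 [ez' ek]]]]; subst q0 q1 k.
      rewrite ez' in ez en.
      have n00 : n0 = 0 by move: ez; case: n0.
      subst n0 n1; move: IH => /=; by rewrite /valc.
    * move=> [s' [b' [t' [e0 [e1 [ez' [es ea]]]]]]]; subst q0 q1 s'.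
      rewrite ez' in ez en ea.
      have n00 : n0 = 0 by move: ez; case: n0.
      subst n0.
      case: IH => w1 [s'' [w2 [ew [hr [hs'' hb]]]]].
      exists t', w1, s'', w2; split => //; split => //; split => //.
      rewrite typ_Bstart in hb.
      have := adj_spec false 0 (delta0_range t'); rewrite /= -ea /= => [[h _]].
      by rewrite -h -en.
- have {}IH := IH hfin.
  case: hs => z [k [hin [ez en]]].
  have [s [b [s' [e0 [e1 [ht ek]]]]]] := tr_read_spec (otr_mem hin); subst q0 q1 k.
  have nn : n1 = n0 by rewrite en ez; case: n0 {ez en} => [|n0] //=; rewrite addn1.
  rewrite nn in IH; clear en nn.
  case: IH => w1 [s'' [w2 [ew [hr [hs'' hb]]]]].
  exists (x :: w1), s'', w2; split; first by rewrite ew.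
  split; first exact: fr_cons ht hr.
  by split => //; rewrite -(Btr_typ ht).
Qed.

Fixpoint mrest (r : seq LL) : Z :=
  match r with [::] => 0%Z | x :: r' => (tau ltA ltB x + b2 (~~ isA x) + mrest r')%Z end.

Lemma mW_mrest x r : reduced (x :: r) -> mW ltA ltB (x :: r) = (tau ltA ltB x + mrest r)%Z.
Proof.
elim: r x => [|y r IH] x h; first by rewrite /=; lia.
rewrite mW_cc IH; last exact: red_cons h.
case/and3P: h => _ h _; rewrite /=.
by case: (isA x) h; case: (isA y) => //= _; lia.
Qed.

Lemma piX_catM u v : piX (u ++ v) = gmul (piX u) (piX v).
Proof. by case: hpiX. Qed.
Lemma rho_cons x r : rho iA iB (x :: r) = gmul (iot x) (rho iA iB r).
Proof. by []. Qed.

Lemma delta_typL x : delta (typL x) = (tau ltA ltB x + b2 (~~ isA x))%Z.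
Proof. by rewrite /delta /typL /tau /=; case: (negL _ _ x); case: (isA x). Qed.
Lemma delta0_typL x : delta0 (typL x) = tau ltA ltB x.
Proof. by rewrite /delta0 /typL /tau /=; case: (negL _ _ x). Qed.

Lemma Blocks_sem t v w : Blocks t v w ->
  exists r, piX w = rho iA iB r /\ reduced r /\
    (forall y r', r = y :: r' -> (~~ isA y) != t.1) /\ (0 <= v + mrest r)%Z.
Proof.
elim=> [t0 v0 hv | t0 t' v0 w0 s0 w1 ht hr hs _ [r [er [hred [hhead hm]]]]].
- by exists [::]; split => //; split => //; split => //; rewrite /=; lia.
- have [x [nx [tx ex]]] := block_sound hr hs.
  exists (x :: r); split; first by rewrite piX_catM er ex.
  split.
  + rewrite /= nx hred andbT.
    case: r {er hm hred} hhead => // y r' /(_ y r' erefl).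
    by rewrite -tx /typL /=; case: (isA x); case: (isA y).
  + split.
    * by move=> y r' [<- _]; rewrite -tx in ht.
    * by rewrite -tx delta_typL in hm; rewrite /=; lia.
Qed.

Lemma oca_reach_cat q n u q1 n1 v q2 n2 :
  @oca_reach X Moca q n u q1 n1 -> @oca_reach X Moca q1 n1 v q2 n2 ->
  @oca_reach X Moca q n (u ++ v) q2 n2.
Proof.
elim=> [q0 n0 hv| ??????? h _ IH hv| ???????? h _ IH hv]; first by [].
- exact: oca_eps h (IH hv).
- exact: oca_read h (IH hv).
Qed.

Lemma lift_read s w s' : freach Btr s w s' ->
  forall b n, @oca_reach X Moca (Some (s, b)) n w (Some (s', b)) n.
Proof.
elim=> [s0|s0 x s1 w0 s2 h _ IH] b n; first exact: oca_nil.
apply: (@oca_read X Moca (Some (s0, b)) n x (Some (s1, b)) n w0 (Some (s2, b)) n); last exact: IH.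
exists (n == 0), (if n == 0 then 0 else 1); split; last split => //.
- apply: mem_otr; last by case: (n == 0).
  by rewrite /= eqxx h; case: (n == 0).
- by case: n => [|n] /=; rewrite ?addn1.
Qed.

Lemma switch_step s b n t' : Bfinal s -> t'.1 != (typ s).1 ->
  exists b' n', @oca_step X Moca (Some (s, b)) n None (Some (Bstart t', b')) n' /\
    valc b' n' = (valc b n + delta t')%Z.
Proof.
move=> hs ht.
have [e hk] := adj_spec b n (delta_range t').
exists (adj b (n == 0) (delta t')).1,
  (if n == 0 then (adj b (n == 0) (delta t')).2 else n.-1 + (adj b (n == 0) (delta t')).2).
split => //.
exists (n == 0), (adj b (n == 0) (delta t')).2; split => //.
apply: mem_otr => //=; rewrite hs /=; apply/orP; left.
apply/existsP; exists t'; rewrite eqxx ht /=.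
by case: (adj _ _ _).
Qed.

Lemma run_complete r : reduced r -> forall s b n, Bfinal s ->
  (forall y r', r = y :: r' -> (~~ isA y) != (typ s).1) ->
  (0 <= valc b n + mrest r)%Z ->
  exists w q' n', piX w = rho iA iB r /\ @oca_reach X Moca (Some (s, b)) n w q' n' /\ ofin q'.
Proof.
elim: r => [|x r IH] hr s b n hs hh hv.
- case: b hv => hv.
  + have n0 : n = 0 by move: hv; rewrite /valc /=; lia.
    subst n; exists [::], (Some (s, false)), 0; split => //; split => //.
    apply: (@oca_eps X Moca (Some (s, true)) 0 (Some (s, false)) 0 [::] (Some (s, false)) 0); last exact: oca_nil.
    exists true, 0; split => //; apply: mem_otr => //=.
    by rewrite eqxx orbT.
  + by exists [::], (Some (s, false)), n; split => //; split => //; exact: oca_nil.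
- have nx := red_ntriv hr.
  have [w0 [s0 [h0 [hs0 e0]]]] := block_complete nx.
  have ht : (typL x).1 != (typ s).1 by rewrite /typL /=; exact: hh x r erefl.
  have [b' [n' [hst hval]]] := switch_step b n hs ht.
  have ty0 : typ s0 = typL x by rewrite (freach_typ h0) typ_Bstart.
  have hh' : forall y r', r = y :: r' -> (~~ isA y) != (typ s0).1.
    move=> y r' er; rewrite ty0 /typL /=; subst r.
    by case/and3P: hr => _ h _; case: (isA x) h; case: (isA y).
  have hv' : (0 <= valc b' n' + mrest r)%Z.
    by rewrite hval; move: hv; rewrite /= -delta_typL; lia.
  have [w1 [q' [n'' [e1 [hr1 hf1]]]]] := IH (red_cons hr) s0 b' n' hs0 hh' hv'.
  exists (w0 ++ w1), q', n''; split; first by rewrite piX_catM e0 e1.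
  split => //.
  apply: oca_eps hst _.
  exact: oca_reach_cat (lift_read h0 b' n') hr1.
Qed.

Definition Pg (g : G) : Prop := ev f g <> [::] /\ (0 <= mW ltA ltB (ev f g))%Z.
Definition ltG (g h : G) : Prop := Pg (gmul (ginv g) h).

Lemma evM g h : ev f (gmul g h) = mulW (ev f g) (ev f h).
Proof. exact (ev_mul Hfp hf hfA hfB g h). Qed.
Lemma ev1 : ev f (gone G) = [::].
Proof. exact: ev_one hf. Qed.
Lemma ev_ne g : g <> gone G -> ev f g <> [::].
Proof. by move=> ng e; apply: ng; apply: (ev_inj Hfp hf hfA hfB); rewrite e ev1. Qed.

Lemma Pg_mul p q : Pg p -> Pg q -> Pg (gmul p q).
Proof.
move=> [np hp] [nq hq]; rewrite /Pg evM.
have := QM hA hB (ev_red f p) (ev_red f q).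
split; last by lia.
move=> e; have := INV hA hB (ev_red f p) (ev_red f q) np e; lia.
Qed.
Lemma Pg_inv_sum g : g <> gone G ->
  (mW ltA ltB (ev f g) + mW ltA ltB (ev f (ginv g)) = -1)%Z.
Proof.
move=> ng; apply: (INV hA hB (ev_red f g) (ev_red f (ginv g)) (ev_ne ng)).
by rewrite -evM gmulV ev1.
Qed.
Lemma Pg1 : ~ Pg (gone G).
Proof. by rewrite /Pg ev1; case. Qed.

Lemma ltG_order : is_left_order ltG.
Proof.
split; last split; last split.
- by move=> x; rewrite /ltG gmulVl; exact: Pg1.
- move=> x y z h1 h2; have := Pg_mul h1 h2.
  by rewrite /ltG -gmulA gmulVK.
- move=> x y.
  case: (classic (gmul (ginv x) y = gone G)) => e.
    by left; rewrite -(gmulVK x y) e gmul1r.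
  right; have s := Pg_inv_sum e.
  have ninv : ginv (gmul (ginv x) y) <> gone G.
    by move=> e'; apply: e; rewrite -(ginvK (gmul _ _)) e' ginv1.
  case: (Z_le_gt_dec 0 (mW ltA ltB (ev f (gmul (ginv x) y)))) => h.
  + by left; split => //; exact: ev_ne.
  + right; rewrite /ltG; rewrite ginvM ginvK in s ninv *.
    split; [exact: ev_ne | lia].
- by move=> g x y; rewrite /ltG ginvM -gmulA gmulKV.
Qed.

Lemma cone_eq g : positive_cone ltG g <-> Pg g.
Proof. by rewrite /positive_cone /ltG ginv1 gmul1l. Qed.

Lemma piX_surj_rho r : exists w, piX w = rho iA iB r.
Proof.
elim: r => [|x r [w ew]]; first by exists [::].
case: x => k.
- have [u eu] := spiA k; exists (map e1A u ++ w).
  by rewrite piX_catM ew (piX_e1 hpiA homA hpiX he1A) eu.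
- have [u eu] := spiB k; exists (map e1B u ++ w).
  by rewrite piX_catM ew (piX_e1 hpiB homB hpiX he1B) eu.
Qed.

Lemma piX_surj g : exists w, piX w = g.
Proof.
have [w ew] := piX_surj_rho (ev f g); exists w; by rewrite ew (rho_ev Hfp hf hfA hfB).
Qed.

Lemma oca_sound w : oca_accepts Moca w -> Pg (piX w).
Proof.
case=> q [n [hr hq]].
have := inv_reach hr hq; rewrite /=.
move=> [t [w0 [s [w1 [-> [h0 [hs hb]]]]]]].
have [x [nx [tx ex]]] := block_sound h0 hs.
have [r [er [hred [hh hm]]]] := Blocks_sem hb.
have hxr : reduced (x :: r).
  rewrite /= nx hred andbT.
  case: r {er hm hred} hh => // y r' /(_ y r' erefl).
  by rewrite -tx /typL /=; case: (isA x); case: (isA y).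
rewrite piX_catM ex er -rho_cons /Pg (ev_rho Hfp hf hfA hfB hxr).
split => //; rewrite (mW_mrest hxr).
by move: hm; rewrite -tx delta0_typL.
Qed.

Lemma oca_complete g : Pg g -> exists w, oca_accepts Moca w /\ piX w = g.
Proof.
move=> [ne hm].
have hred := ev_red f g.
case E: (ev f g) ne hm hred => [//|x r] _ hm hred.
have [w0 [s0 [h0 [hs0 e0]]]] := block_complete (red_ntriv hred).
pose t := typL x.
have [e hk] := adj_spec false 0 (delta0_range t).
set b' := (adj false (0 == 0) (delta0 t)).1 in e.
set k := (adj false (0 == 0) (delta0 t)).2 in e hk.
have hst : @oca_step X Moca None 0 None (Some (Bstart t, b')) k.
  exists true, k; split => //; apply: mem_otr => //=.
  by apply/existsP; exists t; rewrite eqxx /b' /k /=; case: adj.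
have ty0 : typ s0 = t by rewrite (freach_typ h0) typ_Bstart.
have hh : forall y r', r = y :: r' -> (~~ isA y) != (typ s0).1.
  move=> y r' er; rewrite ty0 /t /typL /=; subst r.
  by case/and3P: hred => _ h _; case: (isA x) h; case: (isA y).
have hv : (0 <= valc b' k + mrest r)%Z.
  rewrite /= in e; rewrite e /valc /= /t delta0_typL.
  by move: hm; rewrite (mW_mrest hred); lia.
have [w1 [q' [n'' [e1 [hr1 hf1]]]]] := run_complete (red_cons hred) hs0 hh hv.
exists (w0 ++ w1); split.
- exists q', n''; split => //.
  apply: oca_eps hst _.
  exact: oca_reach_cat (lift_read h0 b' k) hr1.
- by rewrite piX_catM e0 e1 -rho_cons -E (rho_ev Hfp hf hfA hfB).
Qed.

Lemma main_result : one_counter_left_order ltG.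
Proof.
split; first exact: ltG_order.
exists X, piX; split; first exact: hpiX.
split; first exact: piX_surj.
exists Moca; split.
- by move=> w hw; apply/cone_eq; exact: oca_sound.
- by move=> g /cone_eq; exact: oca_complete.
Qed.
End Main.


Theorem corollary5p9 (A B G : group) (iA : A -> G) (iB : B -> G) :
  is_free_product iA iB ->
  admits_regular_left_order A -> admits_regular_left_order B ->
  admits_one_counter_left_order G.
Proof.
move=> Hfp [ltA [hA [YA [piA [hpiA [spiA [MA hMA]]]]]]] [ltB [hB [YB [piB [hpiB [spiB [MB hMB]]]]]]].
have Hfp' := Hfp; case: Hfp' => hiA [hiB U].
case: (U (Sym A B) (@pA A B) (@pB A B) (@pA_hom A B) (@pB_hom A B)) => [[f [hf [hfA hfB]]] _].
eexists; exact: (main_result Hfp hA hpiA spiA hMA hB hpiB spiB hMB hf hfA hfB).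
Qed.
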